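(* Let $X$ be a metric space and $\tau\in\mathrm{Fin}\,\mathbb N\cup\{\emptyset\}$ such that $\operatorname{Ord}A(X)^\tau=\alpha$ for some ordinal number $\alpha$. Then for each ordinal $\xi\le\alpha$ there exists $\sigma\in\mathrm{Fin}\,\mathbb N\cup\{\emptyset\}$ such that $\operatorname{Ord}A(X)^{\tau\cup\sigma}=\xi$.
   Context: A family $\mathcal A$ of subsets of a metric space is uniformly bounded if there is $C>0$ with $\operatorname{diam}A\le C$ for all $A\in\mathcal A$; it is $r$-disjoint if $d(A_1,A_2)\ge r$ for all distinct $A_1,A_2\in\mathcal A$. For a set $L$, $\mathrm{Fin}\,L$ is the collection of finite nonempty subsets of $L$. For $M\subset \mathrm{Fin}\,L$ and $\sigma\in\{\emptyset\}\cup\mathrm{Fin}\,L$, $M^\sigma=\{\tau\in\mathrm{Fin}\,L:\sigma\cup\tau\in M,\ \sigma\cap\tau=\emptyset\}$, and $M^a=M^{\{a\}}$. The ordinal $\operatorname{Ord}M$: $\operatorname{Ord}M=0$ iff $M=\emptyset$; $\operatorname{Ord}M\le\alpha$ iff $\operatorname{Ord}M^a<\alpha$ for every $a\in L$; $\operatorname{Ord}M=\alpha$ iff $\operatorname{Ord}M\le\alpha$ and not $\operatorname{Ord}M<\alpha$; $\operatorname{Ord}M=\infty$ iff $\operatorname{Ord} M\le\alpha$ for no ordinal $\alpha$. For a metric space $X$, $A(X)$ is the set of $\sigma\in\mathrm{Fin}\,\mathbb N$ such that there do NOT exist uniformly bounded families $\mathcal V_i$, $i\in\sigma$, with $\bigcup_{i\in\sigma}\mathcal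 V_i$ covering $X$ and each $\mathcal V_i$ being $i$-disjoint; here $L=\mathbb N$. *)

(* Defs.v *)
From Stdlib Require Import Reals.
From mathcomp Require Import all_boot all_order.
From mathcomp Require Import finmap.

Set Implicit Arguments.
Unset Strict Implicit.
Unset Printing Implicit Defensive.

Local Open Scope fset_scope.

Definition is_metric (T : Type) (d : T -> T -> R) : Prop :=
  (forall x y, Rle R0 (d x y)) /\
  (forall x y, d x y = R0 <-> x = y) /\
  (forall x y, d x y = d y x) /\
  (forall x y z, Rle (d x z) (Rplus (d x y) (d y z))).

Definition family (T : Type) := (T -> Prop) -> Prop.

(* uniformly bounded: exists C > 0 with diam A <= C for all A in the family;
   diam A <= C unfolds to: d x y <= C for all x, y in A. *)
Definition unif_bounded (T : Type) (d : T -> T -> R) (V : family T) : Prop :=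
  exists C : R, Rlt R0 C /\
    forall A, V A -> forall x y, A x -> A y -> Rle (d x y) C.

(* r-disjoint: d(A1,A2) >= r for distinct members; d(A1,A2) = inf d(x,y),
   so this unfolds to d x y >= r for all x in A1, y in A2. *)
Definition r_disjoint (T : Type) (d : T -> T -> R) (r : R) (V : family T) : Prop :=
  forall A1 A2, V A1 -> V A2 -> A1 <> A2 ->
    forall x y, A1 x -> A2 y -> Rle r (d x y).

Definition posnat := {n : nat | (0 < n)%N}.

(* A subset M of Fin L is a predicate on {fset L} whose members are nonempty;
   sigma in {emptyset} u Fin L is any {fset L}. *)
Definition upper (L : choiceType) (M : {fset L} -> Prop) (sigma : {fset L})
  : {fset L} -> Prop :=
  fun tau => tau != fset0 /\ M (sigma `|` tau) /\ [disjoint sigma & tau].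

(* Ord M <= alpha  (least fixed point; alpha ranges over a well-ordered type):
   Ord M = 0 iff M = empty, and for nonempty M, Ord M <= alpha iff
   for every a in L, Ord M^a < alpha, i.e. Ord M^a <= beta for some beta < alpha. *)
Inductive ord_le (L : choiceType) (disp : Order.disp_t) (O : orderType disp)
  : ({fset L} -> Prop) -> O -> Prop :=
| ord_le_empty M alpha : (forall s, ~ M s) -> ord_le M alpha
| ord_le_step M alpha :
    (forall a : L, exists beta : O, (beta < alpha)%O /\ ord_le (upper M [fset a]) beta) ->
    ord_le M alpha.

Definition ord_eq (L : choiceType) (disp : Order.disp_t) (O : orderType disp)
  (M : {fset L} -> Prop) (alpha : O) : Prop :=
  ord_le M alpha /\ forall beta : O, (beta < alpha)%O -> ~ ord_le M beta.

Definition AX (T : Type) (d : T -> T -> R) : {fset posnat} -> Prop :=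
  fun sigma => sigma != fset0 /\
    ~ exists V : posnat -> family T,
        (forall i, i \in sigma ->
           unif_bounded d (V i) /\ r_disjoint d (INR (val i)) (V i)) /\
        (forall x : T, exists i, i \in sigma /\ exists A, V i A /\ A x).

(* Ordinals are represented by an arbitrary well-ordered type O. *)
Definition well_ordered (disp : Order.disp_t) (O : orderType disp) : Prop :=
  well_founded (fun x y : O => (x < y)%O).

(* Main.v *)
Require Import Defs.
From Stdlib Require Import Reals.
From mathcomp Require Import all_boot all_order.
From mathcomp Require Import finmap.
From Stdlib Require Import Classical FunctionalExtensionality PropExtensionality.
Import Order.TTheory.
Local Open Scope fset_scope.

Lemma upper_upper (L : choiceType) (M : {fset L} -> Prop) (t : {fset L}) (a : L) :
  a \notin t -> upper (upper M t) [fset a] = upper M (t `|` [fset a]).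
Proof.
move=> at_; apply: functional_extensionality => r.
apply: propositional_extensionality; rewrite /upper fsetUA.
rewrite fdisjointUX fdisjointXU fdisjoint1X fdisjointX1 at_ /=.
split.
- by case=> r0 [[_ [Hm Hd]] Har]; rewrite Har Hd.
- case=> r0 [Hm /andP[Hd Har]]; split=> //; split=> //; split=> //.
  by apply/fset0Pn; exists a; rewrite in_fsetU in_fset1 eqxx.
Qed.

Lemma upper_in (L : choiceType) (M : {fset L} -> Prop) (t : {fset L}) (a : L) :
  a \in t -> forall s, ~ upper (upper M t) [fset a] s.
Proof.
move=> at_ s [_ [[_ [_ Hd]] _]].
by move/fdisjointP: Hd => /(_ a at_); rewrite in_fsetU in_fset1 eqxx.
Qed.

Lemma least_el (disp : Order.disp_t) (O : orderType disp) (hO : well_ordered O)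
  (P : O -> Prop) x : P x ->
  exists m, P m /\ (m <= x)%O /\ forall y, (y < m)%O -> ~ P y.
Proof.
pattern x; apply: (well_founded_ind hO) => {}x IH Px.
case: (classic (exists y, (y < x)%O /\ P y)).
- case=> y [yx Py]; case: (IH y yx Py) => m [Pm [my H]].
  exists m; split=> //; split=> //; exact: (le_trans my (ltW yx)).
- move=> H; exists x; split=> //; split=> // y yx Py; apply: H; by exists y.
Qed.

Theorem lemma5 (T : Type) (d : T -> T -> R) (hd : is_metric d)
  (disp : Order.disp_t) (O : orderType disp) (hO : well_ordered O)
  (tau : {fset posnat}) (alpha : O) :
  ord_eq (upper (AX d) tau) alpha ->
  forall xi : O, (xi <= alpha)%O ->
    exists sigma : {fset posnat}, ord_eq (upper (AX d) (tau `|` sigma)) xi.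
Proof.
move: tau; pattern alpha; apply: (well_founded_ind hO) => {}alpha IH tau [Hle Hmin] xi.
rewrite le_eqVlt => /orP[/eqP ->|xa].
  by exists fset0; rewrite fsetU0.
have Hn := Hmin xi xa.
have Hstep : forall a, exists beta, (beta < alpha)%O /\
    ord_le (upper (upper (AX d) tau) [fset a]) beta.
  case: Hle Hn => M al Hemp Hn; first by exfalso; apply: Hn; apply: ord_le_empty.
  by [].
have [a [aT Ha]] : exists a, a \notin tau /\
   ~ (exists beta, (beta < xi)%O /\ ord_le (upper (upper (AX d) tau) [fset a]) beta).
  case: (classic (exists b, (b < xi)%O)) => [[b0 b0x]|Hnb].
  - apply: NNPP => Hc; apply: Hn; apply: ord_le_step => a.
    case: (boolP (a \in tau)) => aT.
      by exists b0; split=> //; apply: ord_le_empty; apply: upper_in.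
    apply: NNPP => Hc2; apply: Hc; by exists a.
  - have [s Ms] : exists s, upper (AX d) tau s.
      apply: NNPP => Hc; apply: Hn; apply: ord_le_empty => s Ms; apply: Hc; by exists s.
    case: (Ms) => /fset0Pn [a aS] [_ Hd].
    exists a; split; first by move/fdisjointP: Hd => Hd; apply/negP => aT; move: (Hd a aT); rewrite aS.
    by case=> b [bx _]; apply: Hnb; exists b.
case: (Hstep a) => beta [ba Hb].
rewrite upper_upper // in Hb Ha.
case: (@least_el _ _ hO _ _ Hb) => g [Hg [gb Hgmin]].
have ga : (g < alpha)%O by exact: (le_lt_trans gb ba).
have xg : (xi <= g)%O.
  rewrite leNgt; apply/negP => gx; apply: Ha; by exists g.
case: (IH g ga (tau `|` [fset a]) (conj Hg Hgmin) xi xg) => s Hs.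
by exists ([fset a] `|` s); rewrite fsetUA.
Qed.
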